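(* Let $P>0$, $v\ge2$, $\omega\in(0,1)$, and let $\Gamma'_{T_1},\Gamma'_{T_2},\Gamma'_R,\Gamma''_{T_1},\Gamma''_{T_2}\ge0$. Set $B_i=\Gamma''_{T_i}+2\Gamma'_{T_i}+1$ and $C_i=(\Gamma'_R+1)(\Gamma'_{T_i}+1)$ for $i=1,2$. For $D\in(0,1)$ let $\bar\gamma_1=P(1-D)^{-v}$, $\bar\gamma_2=PD^{-v}$ and $$\mathcal L(\omega,D)=\frac{B_2-B_1}{\bar\gamma_2}+\frac{B_1+C_1}{\omega\bar\gamma_2}+\frac{B_1-B_2}{\bar\gamma_1}+\frac{B_2+C_2}{(1-\omega)\bar\gamma_1}.$$ Then $D\mapsto\mathcal L(\omega,D)$ is strictly convex on $(0,1)$ and its unique minimizer on $(0,1)$ is $$D^{\rm opt}=\frac{1}{\left(\dfrac{\omega(1-\omega)(B_2-B_1)+(1-\omega)(B_1+C_1)}{\omega(1-\omega)(B_1-B_2)+\omega(B_2+C_2)}\right)^{\frac{1}{v-1}}+1}.$$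
   Context: Terminals $T_1,T_2$ at normalized distance $1$ with the relay on the segment between them at distance $1-D$ from $T_1$ and $D$ from $T_2$; $v$ is the path-loss exponent, so the terminal–relay average SNRs are $\bar\gamma_1=P(1-D)^{-v}$, $\bar\gamma_2=PD^{-v}$. $\mathcal L$ is (up to a positive factor) the high-SNR asymptotic protocol outage probability, $\omega$ the relay power-allocation coefficient, and $\Gamma'_N,\Gamma''_N$ the first and second moments of the interference power at node $N$. *)

(* Defs.v *)
From Stdlib Require Import Reals.
Open Scope R_scope.

Definition Bcoef (G2 G1 : R) : R := G2 + 2 * G1 + 1.
Definition Ccoef (GR G1 : R) : R := (GR + 1) * (G1 + 1).

Definition gbar1 (P v D : R) : R := P * Rpower (1 - D) (- v).
Definition gbar2 (P v D : R) : R := P * Rpower D (- v).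

Definition Lfun (P v B1 B2 C1 C2 w D : R) : R :=
  (B2 - B1) / gbar2 P v D + (B1 + C1) / (w * gbar2 P v D)
  + (B1 - B2) / gbar1 P v D + (B2 + C2) / ((1 - w) * gbar1 P v D).

Definition Dopt (v B1 B2 C1 C2 w : R) : R :=
  1 / (Rpower ((w * (1 - w) * (B2 - B1) + (1 - w) * (B1 + C1))
               / (w * (1 - w) * (B1 - B2) + w * (B2 + C2))) (1 / (v - 1)) + 1).

(* Main.v *)
Require Import Defs.
From Stdlib Require Import Reals Lra.
Open Scope R_scope.

Lemma Rp_pos x y : 0 < Rpower x y.
Proof. unfold Rpower; apply exp_pos. Qed.

Lemma tangent v x y : 1 < v -> 0 < x -> 0 < y -> x <> y ->
  Rpower y v > Rpower x v + v * Rpower x (v - 1) * (y - x).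
Proof.
  intros hv hx hy hxy.
  destruct (Rlt_or_le x y) as [h|h].
  - destruct (MVT_cor2 (fun t => Rpower t v) (fun t => v * Rpower t (v - 1)) x y h)
      as [c [hc1 hc2]].
    { intros c hc. apply derivable_pt_lim_power. lra. }
    simpl in hc1.
    assert (Rpower x (v-1) < Rpower c (v-1)) by (apply Rlt_Rpower_l; lra).
    assert (v * Rpower x (v-1) * (y - x) < v * Rpower c (v-1) * (y-x)).
    { apply Rmult_lt_compat_r. lra. apply Rmult_lt_compat_l; lra. }
    lra.
  - assert (y < x) by lra.
    destruct (MVT_cor2 (fun t => Rpower t v) (fun t => v * Rpower t (v - 1)) y x H)
      as [c [hc1 hc2]].
    { intros c hc. apply derivable_pt_lim_power. lra. }
    simpl in hc1.
    assert (Rpower c (v-1) < Rpower x (v-1)) by (apply Rlt_Rpower_l; lra).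
    assert (v * Rpower c (v-1) * (x - y) < v * Rpower x (v-1) * (x-y)).
    { apply Rmult_lt_compat_r. lra. apply Rmult_lt_compat_l; lra. }
    lra.
Qed.

Lemma conv v x y t : 1 < v -> 0 < x -> 0 < y -> x <> y -> 0 < t < 1 ->
  Rpower (t * x + (1 - t) * y) v < t * Rpower x v + (1 - t) * Rpower y v.
Proof.
  intros hv hx hy hxy ht.
  set (z := t * x + (1 - t) * y).
  assert (hz : 0 < z) by (unfold z; nra).
  assert (x <> z).
  { unfold z; intro e. apply hxy. nra. }
  assert (y <> z).
  { unfold z; intro e. apply hxy. nra. }
  pose proof (tangent v z x hv hz hx ltac:(auto)) as h1.
  pose proof (tangent v z y hv hz hy ltac:(auto)) as h2.
  set (d := v * Rpower z (v - 1)) in *.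
  assert (t * (Rpower z v + d * (x - z)) < t * Rpower x v) by (apply Rmult_lt_compat_l; lra).
  assert ((1-t) * (Rpower z v + d * (y - z)) < (1-t) * Rpower y v) by (apply Rmult_lt_compat_l; lra).
  assert (t * (d * (x - z)) + (1-t) * (d * (y - z)) = 0) by (unfold z; ring).
  lra.
Qed.

Theorem mainTheorem5 (P v w GT1' GT2' GR' GT1'' GT2'' : R) :
  0 < P -> 2 <= v -> 0 < w < 1 ->
  0 <= GT1' -> 0 <= GT2' -> 0 <= GR' -> 0 <= GT1'' -> 0 <= GT2'' ->
  let B1 := Bcoef GT1'' GT1' in
  let B2 := Bcoef GT2'' GT2' in
  let C1 := Ccoef GR' GT1' in
  let C2 := Ccoef GR' GT2' in
  let L := Lfun P v B1 B2 C1 C2 w in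
  (* strict convexity on (0,1) *)
  (forall x y t : R, 0 < x < 1 -> 0 < y < 1 -> x <> y -> 0 < t < 1 ->
     L (t * x + (1 - t) * y) < t * L x + (1 - t) * L y) /\
  (* Dopt is the unique minimizer on (0,1) *)
  (0 < Dopt v B1 B2 C1 C2 w < 1 /\
   forall D : R, 0 < D < 1 -> D <> Dopt v B1 B2 C1 C2 w ->
     L (Dopt v B1 B2 C1 C2 w) < L D).
Proof.
  intros hP hv hw h1 h2 h3 h4 h5 B1 B2 C1 C2 L.
  set (a := (B2 - B1) + (B1 + C1) / w).
  set (b := (B1 - B2) + (B2 + C2) / (1 - w)).
  assert (hB1 : 1 <= B1) by (unfold B1, Bcoef; lra).
  assert (hB2 : 1 <= B2) by (unfold B2, Bcoef; lra).
  assert (hC1 : 0 <= C1) by (unfold C1, Ccoef; nra).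
  assert (hC2 : 0 <= C2) by (unfold C2, Ccoef; nra).
  assert (ha : 0 < a).
  { unfold a. assert (B1 + C1 < (B1 + C1) / w).
    { apply (Rmult_lt_reg_r w). lra. field_simplify; nra. }
    lra. }
  assert (hb : 0 < b).
  { unfold b. assert (B2 + C2 < (B2 + C2) / (1 - w)).
    { apply (Rmult_lt_reg_r (1 - w)). lra. field_simplify; nra. }
    lra. }
  assert (hL : forall D, 0 < D < 1 -> L D = (a * Rpower D v + b * Rpower (1 - D) v) / P).
  { intros D hD. unfold L, Lfun, gbar1, gbar2. rewrite !Rpower_Ropp.
    pose proof (Rp_pos D v). pose proof (Rp_pos (1 - D) v).
    unfold a, b. field. repeat split; lra. }
  assert (hv1 : 1 < v) by lra.
  split.
  { intros x y t hx hy hxy ht.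
    rewrite hL by nra. rewrite (hL x hx), (hL y hy).
    pose proof (conv v x y t hv1 ltac:(lra) ltac:(lra) hxy ht).
    assert (1 - x <> 1 - y) by lra.
    pose proof (conv v (1 - x) (1 - y) t hv1 ltac:(lra) ltac:(lra) H0 ht).
    replace (1 - (t * x + (1 - t) * y)) with (t * (1 - x) + (1 - t) * (1 - y)) by ring.
    apply (Rmult_lt_reg_r P); [lra|].
    field_simplify; try lra.
    assert (a * Rpower (t * x + (1 - t) * y) v < a * (t * Rpower x v + (1 - t) * Rpower y v))
      by (apply Rmult_lt_compat_l; lra).
    assert (b * Rpower (t * (1 - x) + (1 - t) * (1 - y)) v <
            b * (t * Rpower (1 - x) v + (1 - t) * Rpower (1 - y) v))
      by (apply Rmult_lt_compat_l; lra).
    lra. }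
  assert (hratio : (w * (1 - w) * (B2 - B1) + (1 - w) * (B1 + C1))
               / (w * (1 - w) * (B1 - B2) + w * (B2 + C2)) = a / b).
  { assert (eb : w * (1 - w) * (B1 - B2) + w * (B2 + C2) = w * (1 - w) * b)
      by (unfold b; field; lra).
    assert (ea : w * (1 - w) * (B2 - B1) + (1 - w) * (B1 + C1) = w * (1 - w) * a)
      by (unfold a; field; lra).
    rewrite ea, eb. field. repeat split; lra. }
  unfold Dopt. rewrite hratio.
  set (r := Rpower (a / b) (1 / (v - 1))).
  assert (hr : 0 < r) by apply Rp_pos.
  set (D0 := 1 / (r + 1)).
  assert (hD0 : 0 < D0 < 1).
  { unfold D0. split. apply Rdiv_lt_0_compat; lra.
    apply (Rmult_lt_reg_r (r + 1)). lra. field_simplify; lra. }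
  split; [exact hD0|].
  assert (e1 : 1 - D0 = r * D0) by (unfold D0; field; lra).
  assert (hrk : Rpower r (v - 1) = a / b).
  { unfold r. rewrite Rpower_mult.
    replace (1 / (v - 1) * (v - 1)) with 1 by (field; lra).
    apply Rpower_1. apply Rdiv_lt_0_compat; lra. }
  assert (key : a * Rpower D0 (v - 1) = b * Rpower (1 - D0) (v - 1)).
  { rewrite e1. rewrite <- Rpower_mult_distr by lra. rewrite hrk. field. lra. }
  intros D hD hne.
  rewrite (hL D hD), (hL D0 hD0).
  apply (Rmult_lt_reg_r P); [lra|].
  field_simplify; try lra.
  pose proof (tangent v D0 D hv1 ltac:(lra) ltac:(lra) ltac:(auto)) as t1.
  assert (1 - D0 <> 1 - D) by lra.
  pose proof (tangent v (1 - D0) (1 - D) hv1 ltac:(lra) ltac:(lra) H) as t2.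
  assert (a * (Rpower D0 v + v * Rpower D0 (v - 1) * (D - D0)) < a * Rpower D v)
    by (apply Rmult_lt_compat_l; lra).
  assert (b * (Rpower (1 - D0) v + v * Rpower (1 - D0) (v - 1) * (1 - D - (1 - D0)))
          < b * Rpower (1 - D) v)
    by (apply Rmult_lt_compat_l; lra).
  assert (a * (v * Rpower D0 (v - 1) * (D - D0))
          + b * (v * Rpower (1 - D0) (v - 1) * (1 - D - (1 - D0))) = 0).
  { replace (a * (v * Rpower D0 (v - 1) * (D - D0))) with
      (v * (D - D0) * (a * Rpower D0 (v - 1))) by ring.
    rewrite key. ring. }
  lra.
Qed.
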